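(* In the bandit setting described in the context, let $\gamma=4\eta\mathcal{G}^4m$ and $\epsilon\le\mathcal{G}^2$. Then for all $a\in\mathcal{A}$ and all $t\in\{1,\dots,n\}$, $|\langle\hat w_t-\tilde w_t,\Phi_m(a)\rangle|\le\frac{\epsilon}{\eta\mathcal{G}^2}$.
   Context: $\mathcal{A}\subset\mathbb{R}^d$ is finite; $\mathcal{K}$ is a kernel with feature map $\Phi$, $\sup_{a\in\mathcal{A}}\mathcal{K}(a,a)\le\mathcal{G}^2$; the adversary plays $w_t=\Phi(y_t)$, $y_t\in\mathbb{R}^d$, with $\mathcal{K}(y_t,y_t)\le\mathcal{G}^2$. $\Phi_m:\mathbb{R}^d\to\mathbb{R}^m$ is a finite-dimensional feature map with kernel $\hat{\mathcal{K}}_m(x,y)=\langle\Phi_m(x),\Phi_m(y)\rangle$ which is an $\epsilon$-approximation of $\mathcal{K}$, i.e. $|\mathcal{K}(x,y)-\hat{\mathcal{K}}_m(x,y)|\le\epsilon$ for all relevant pairs (all $x,y\in\mathcal{A}$ and all pairs $(a,y_t)$). The player plays $a_t\sim p_t=\gamma\nu_{\mathcal{J}}^{\mathcal{A}}+(1-\gamma)q_t$ where $q_t$ is any distribution on $\mathcal{A}$ and $\nu_{\mathcal{J}}^{\mathcal{A}}$ is a distribution on $\mathcal{A}$ whose image under $\Phi_m$ is John's distribution of $\mathrm{conv}(\Phi_m(\mathcal{A}))$, in coordinates where John's ellipsoid is the unit ball centered at the origin, so that $\mathbb{E}_{\nu_{\mathcal{J}}^{\mathcal{A}}}[\Phi_m\Phi_m^\top]=I_m/m$.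 $\eta>0$. Let $\Sigma_m^{(t)}=\mathbb{E}_{x\sim p_t}[\Phi_m(x)\Phi_m(x)^\top]$, $\hat w_t=\mathcal{K}(a_t,y_t)(\Sigma_m^{(t)})^{-1}\Phi_m(a_t)$ and $\tilde w_t=\hat{\mathcal{K}}_m(a_t,y_t)(\Sigma_m^{(t)})^{-1}\Phi_m(a_t)$. *)

(* Defs.v *)
From HB Require Import structures.
From mathcomp Require Import all_boot all_order all_algebra.
From mathcomp Require Import reals.
Set Implicit Arguments. Unset Strict Implicit. Unset Printing Implicit Defensive.
Import Order.TTheory GRing.Theory Num.Theory.
Local Open Scope ring_scope.

Section Defs.
Variable R : realType.

Definition dotv (k : nat) (u v : 'cV[R]_k) : R := \sum_(i < k) u i 0 * v i 0.

(* K is a (positive semidefinite, symmetric) kernel on R^d, i.e. it has a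
   feature map into some Hilbert space (Moore--Aronszajn). *)
Definition is_kernel (d : nat) (K : 'cV[R]_d -> 'cV[R]_d -> R) : Prop :=
  (forall x y, K x y = K y x) /\
  (forall (N : nat) (z : 'I_N -> 'cV[R]_d) (c : 'I_N -> R),
      0 <= \sum_(i < N) \sum_(j < N) c i * c j * K (z i) (z j)).

Definition is_distr (T : finType) (p : T -> R) : Prop :=
  (forall x, 0 <= p x) /\ \sum_x p x = 1.

Definition khat (d m : nat) (Phim : 'cV[R]_d -> 'cV[R]_m) (x y : 'cV[R]_d) : R :=
  dotv (Phim x) (Phim y).

Definition second_moment (T : finType) (d m : nat) (A : T -> 'cV[R]_d)
    (Phim : 'cV[R]_d -> 'cV[R]_m) (p : T -> R) : 'M[R]_m :=
  \sum_(x : T) p x *: (Phim (A x) *m (Phim (A x))^T).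

(* nu is John's distribution of conv(Phi_m(A)), in coordinates in which John's
   ellipsoid (maximal volume inscribed ellipsoid) is the unit ball centered at
   the origin.  By John's theorem this means: the unit ball is contained in
   conv(Phi_m(A)), nu is a distribution supported on contact points
   (points of Phi_m(A) on the unit sphere), with mean 0 and
   E_nu[Phi_m Phi_m^T] = I_m / m. *)
Definition john_distribution (T : finType) (d m : nat) (A : T -> 'cV[R]_d)
    (Phim : 'cV[R]_d -> 'cV[R]_m) (nu : T -> R) : Prop :=
  [/\ is_distr nu,
      (forall u : 'cV[R]_m, dotv u u <= 1 ->
         exists lam : T -> R, is_distr lam /\ u = \sum_x lam x *: Phim (A x)),
      (forall x, 0 < nu x -> dotv (Phim (A x)) (Phim (A x)) = 1),
      \sum_x nu x *: Phim (A x) = 0 &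
      second_moment A Phim nu = m%:R^-1 *: 1%:M].

End Defs.

(* Main.v *)
Require Import Defs.
From HB Require Import structures.
From mathcomp Require Import all_boot all_order all_algebra.
From mathcomp Require Import reals.
From mathcomp Require Import ring lra.
Import Order.TTheory GRing.Theory Num.Theory.
Local Open Scope ring_scope.

Set Implicit Arguments.
Section H.
Variable R : realType.
Implicit Types k : nat.

Lemma dotvC k (u v : 'cV[R]_k) : dotv u v = dotv v u.
Proof. by rewrite /dotv; apply: eq_bigr => i _; rewrite mulrC. Qed.

Lemma dotvDl k (u v w : 'cV[R]_k) : dotv (u + v) w = dotv u w + dotv v w.
Proof. by rewrite /dotv -big_split; apply: eq_bigr => i _; rewrite mxE mulrDl. Qed.

Lemma dotvZl k c (u v : 'cV[R]_k) : dotv (c *: u) v = c * dotv u v.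
Proof. by rewrite /dotv mulr_sumr; apply: eq_bigr => i _; rewrite mxE mulrA. Qed.

Lemma dotvNl k (u v : 'cV[R]_k) : dotv (- u) v = - dotv u v.
Proof. by rewrite /dotv -sumrN; apply: eq_bigr => i _; rewrite mxE mulNr. Qed.

Lemma dotv_ge0 k (u : 'cV[R]_k) : 0 <= dotv u u.
Proof. by apply: sumr_ge0 => i _; rewrite -expr2 sqr_ge0. Qed.

Lemma dotv_suml k (T : finType) (F : T -> 'cV[R]_k) v :
  dotv (\sum_x F x) v = \sum_x dotv (F x) v.
Proof.
rewrite /dotv; under eq_bigr => i _ do rewrite summxE big_distrl.
by rewrite exchange_big.
Qed.

Lemma dotv_eq0 k (u : 'cV[R]_k) : dotv u u = 0 -> u = 0.
Proof.
move=> H; apply/matrixP => i l; rewrite ord1 mxE.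
have Hp : forall j : 'I_k, 0 <= u j 0 * u j 0 by move=> j; rewrite -expr2 sqr_ge0.
have := @psumr_eq0P R _ xpredT (fun j => u j 0 * u j 0) (fun j _ => Hp j) H i isT.
by move/eqP; rewrite mulf_eq0 orbb => /eqP.
Qed.

Lemma outer_mul k (v u : 'cV[R]_k) : (v *m v^T) *m u = (dotv v u) *: v.
Proof.
apply/matrixP => i j; rewrite ord1 !mxE /dotv mulr_suml.
apply: eq_bigr => l _; rewrite !mxE big_ord1 !mxE; ring.
Qed.


Lemma dotv0r k (u : 'cV[R]_k) : dotv u 0 = 0.
Proof. by rewrite /dotv big1 // => i _; rewrite mxE mulr0. Qed.

Lemma dotv_expand k c (x u : 'cV[R]_k) :
  dotv (x - c *: u) (x - c *: u) = dotv x x - 2 * c * dotv u x + c ^+ 2 * dotv u u.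
Proof.
rewrite /dotv !mulr_sumr -sumrB -big_split; apply: eq_bigr => i _; rewrite !mxE /=; ring.
Qed.

Lemma amgm_sum (T : finType) (p a b : T -> R) : (forall x, 0 <= p x) ->
  2 * `|\sum_x p x * (a x * b x)| <= \sum_x p x * (a x * a x) + \sum_x p x * (b x * b x).
Proof.
move=> p0.
have e1 : \sum_x p x * ((a x + b x) ^+ 2) = \sum_x p x * (a x * a x)
   + \sum_x p x * (b x * b x) + 2 * \sum_x p x * (a x * b x).
  by rewrite mulr_sumr -!big_split; apply: eq_bigr => x _ /=; ring.
have e2 : \sum_x p x * ((a x - b x) ^+ 2) = \sum_x p x * (a x * a x)
   + \sum_x p x * (b x * b x) - 2 * \sum_x p x * (a x * b x).
  by rewrite mulr_sumr -big_split -sumrB; apply: eq_bigr => x _ /=; ring.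
have h1 : 0 <= \sum_x p x * ((a x + b x) ^+ 2).
  by apply: sumr_ge0 => x _; rewrite mulr_ge0 // sqr_ge0.
have h2 : 0 <= \sum_x p x * ((a x - b x) ^+ 2).
  by apply: sumr_ge0 => x _; rewrite mulr_ge0 // sqr_ge0.
rewrite e1 in h1; rewrite e2 in h2.
have [s0|s0] := lerP 0 (\sum_x p x * (a x * b x)).
  rewrite ger0_norm //; lra.
rewrite ltr0_norm //; lra.
Qed.

Lemma sm_form (T : finType) d m (A : T -> 'cV[R]_d) (Phim : 'cV[R]_d -> 'cV[R]_m)
  (p : T -> R) (a b : 'cV[R]_m) :
  dotv a (second_moment A Phim p *m b) =
  \sum_x p x * (dotv (Phim (A x)) a * dotv (Phim (A x)) b).
Proof.
rewrite /second_moment mulmx_suml dotvC dotv_suml; apply: eq_bigr => x _.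
rewrite -scalemxAl outer_mul !dotvZl. ring.
Qed.

End H.
Unset Implicit Arguments.
Arguments dotvC {R k}. Arguments dotv_ge0 {R k}. Arguments dotv_eq0 {R k u}. Arguments amgm_sum {R T}. Arguments dotv_expand {R k}. Arguments sm_form {R T d m}. Arguments dotvZl {R k}. Arguments dotv0r {R k}.

Theorem lemma6
  (R : realType) (d m n : nat)
  (T : finType) (A : T -> 'cV[R]_d) (A_inj : injective A)
  (K : 'cV[R]_d -> 'cV[R]_d -> R) (HK : is_kernel K)
  (G eta eps : R) (G_pos : 0 < G) (eta_pos : 0 < eta)
  (HKA : forall a : T, K (A a) (A a) <= G ^+ 2)
  (y : nat -> 'cV[R]_d)
  (Hy : forall t, (1 <= t <= n)%N -> K (y t) (y t) <= G ^+ 2)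
  (Phim : 'cV[R]_d -> 'cV[R]_m)
  (Happ_AA : forall a b : T, `|K (A a) (A b) - khat Phim (A a) (A b)| <= eps)
  (Happ_Ay : forall (a : T) t, (1 <= t <= n)%N ->
      `|K (A a) (y t) - khat Phim (A a) (y t)| <= eps)
  (nu : T -> R) (Hnu : john_distribution A Phim nu)
  (gamma : R) (Hgamma : gamma = 4%:R * eta * G ^+ 4 * m%:R)
  (Hgamma1 : gamma <= 1)
  (Heps : eps <= G ^+ 2)
  (q : nat -> T -> R) (Hq : forall t, (1 <= t <= n)%N -> is_distr (q t))
  (at_ : nat -> T) :
  let p t x := gamma * nu x + (1 - gamma) * q t x in
  let Sigma t := second_moment A Phim (p t) in
  let what t := K (A (at_ t)) (y t) *: (invmx (Sigma t) *m Phim (A (at_ t))) in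
  let wtil t := khat Phim (A (at_ t)) (y t) *: (invmx (Sigma t) *m Phim (A (at_ t))) in
  forall (a : T) (t : nat), (1 <= t <= n)%N ->
    `|dotv (what t - wtil t) (Phim (A a))| <= eps / (eta * G ^+ 2).
Proof.
move=> p Sigma what wtil a t Ht.
have eps0 : 0 <= eps by apply: le_trans (Happ_AA a a).
have [m0|mpos] := eqVneq m 0%N.
  subst m; rewrite /dotv big_ord0 normr0 divr_ge0 // mulr_ge0 ?exprn_ge0 ?ltW //.
have hq := Hq t Ht; case: hq => [q0 q1].
case: Hnu => [[nu0 nu1] _ _ _ Hsm].
have mR : (m%:R : R) != 0 by rewrite pnatr_eq0.
have mR0 : (0 : R) < m%:R by rewrite ltr0n lt0n.
set c := 4%:R * eta * G ^+ 4.
have G2 : 0 < G ^+ 2 by rewrite exprn_gt0.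
have c0 : 0 < c by rewrite /c !mulr_gt0 // exprn_gt0.
have gam0 : 0 <= gamma by rewrite Hgamma mulr_ge0 // ltW.
have hc : gamma * m%:R^-1 = c by rewrite Hgamma mulfK.
set S := Sigma t.
have Qb : forall u : 'cV[R]_m, c * dotv u u <= dotv u (S *m u).
  move=> u; rewrite /S /Sigma sm_form.
  set r := fun x => dotv (Phim (A x)) u.
  have E : \sum_x p t x * (r x * r x) = gamma * \sum_x nu x * (r x * r x)
     + (1 - gamma) * \sum_x q t x * (r x * r x).
    by rewrite !mulr_sumr -big_split; apply: eq_bigr => x _; rewrite /p /=; ring.
  rewrite E -(sm_form A Phim nu u u) Hsm -scalemxAl mul1mx (dotvC u (_ *: u)) dotvZl.
  rewrite mulrA hc lerDl mulr_ge0 ?subr_ge0 //.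
  by apply: sumr_ge0 => x _; rewrite mulr_ge0 // -expr2 sqr_ge0.
have Su : S \in unitmx.
  rewrite unitmxE unitfE -det_tr; apply/det0P => -[v vn0 hv].
  have hS : S *m v^T = 0 by rewrite -[S]trmxK -trmx_mul hv trmx0.
  have := Qb v^T; rewrite hS dotv0r => h.
  have hd : dotv v^T v^T = 0.
    apply/eqP; rewrite eq_le dotv_ge0 andbT.
    by rewrite -(pmulr_rle0 _ c0).
  move/negP: vn0; apply; apply/eqP.
  by rewrite -[v]trmxK (dotv_eq0 hd) trmx0.
set x := Phim (A a); set z := Phim (A (at_ t)).
set u := invmx S *m x; set w := invmx S *m z.
have hu : S *m u = x by rewrite /u mulKVmx.
have hw : S *m w = z by rewrite /w mulKVmx.
have kx : dotv x x <= 2 * G ^+ 2.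
  have := Happ_AA a a; have := HKA a; rewrite /khat -/x ler_norml; lra.
have kz : dotv z z <= 2 * G ^+ 2.
  have := Happ_AA (at_ t) (at_ t); have := HKA (at_ t); rewrite /khat -/z ler_norml; lra.
have bnd : forall (v xx : 'cV[R]_m), S *m v = xx -> c * dotv v xx <= dotv xx xx.
  move=> v xx hv.
  have h1 := dotv_ge0 (xx - c *: v); rewrite dotv_expand in h1.
  have h2 := Qb v; rewrite hv in h2.
  have := dotv_ge0 v; have := ltW c0; nra.
have bu := bnd u x hu; have bw := bnd w z hw.
have g1 : 0 <= 1 - gamma by rewrite subr_ge0.
have pp : forall x, 0 <= p t x.
  by move=> x0; rewrite /p addr_ge0 // mulr_ge0.
have am := amgm_sum (p t) (fun x => dotv (Phim (A x)) w) (fun x => dotv (Phim (A x)) u) pp.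
have ewx : dotv w x = \sum_x0 p t x0 * (dotv (Phim (A x0)) w * dotv (Phim (A x0)) u).
  by rewrite -{1}hu /S /Sigma sm_form.
have eux : dotv u x = \sum_x0 p t x0 * (dotv (Phim (A x0)) u * dotv (Phim (A x0)) u).
  by rewrite -{1}hu /S /Sigma sm_form.
have ewz : dotv w z = \sum_x0 p t x0 * (dotv (Phim (A x0)) w * dotv (Phim (A x0)) w).
  by rewrite -{1}hw /S /Sigma sm_form.
rewrite -ewx -eux -ewz in am.
have eg : 0 < eta * G ^+ 2 by rewrite mulr_gt0.
have hB : `|dotv w x| <= (eta * G ^+ 2)^-1.
  rewrite -[X in _ <= X]mul1r ler_pdivlMr //.
  have G4 : G ^+ 4 = G ^+ 2 * G ^+ 2 by rewrite -exprD.
  move: bu bw am kx kz; rewrite /c G4.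
  have := normr_ge0 (dotv w x).
  move: G2 eta_pos; set g := G ^+ 2; set B := `|dotv w x|.
  move=> g0 e0 B0 hbu hbw ham hkx hkz.
  have C0 : 0 < 4 * eta * (g * g) by rewrite !mulr_gt0.
  move: C0 hbu hbw; set C := 4 * eta * (g * g) => C0 hbu hbw.
  have h : C * (2 * B) <= 4 * g.
    have := ler_wpM2l (ltW C0) ham; lra.
  have hD : g * (8 * (B * (eta * g))) <= g * 4.
    by move: h; rewrite /C; congr (_ <= _); ring.
  rewrite ler_pM2l // in hD; lra.
rewrite /what /wtil -scalerBl dotvZl normrM.
apply: ler_pM; [exact: normr_ge0 | exact: normr_ge0 | exact: Happ_Ay | exact: hB].
Qed.
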